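(* Let $F$ be a commutative field, $1\le h\le n-1$, and let $K$ be a linear complex of $h$-subspaces in $\mathrm{PG}(n,F)$. Then: (a) the partial map $\uparrow K:\Gamma(n,h-1,F)\to\mathrm{PG}(n,F)^*$ is a linear mapping with non-empty domain satisfying the null property $U\subseteq U^{\uparrow K}$ for all $U\in\mathbb D(\uparrow K)$ (i.e. it is a generalised null polarity); (b) the image of $\uparrow K$ spans a subspace of $\mathrm{PG}(n,F)^*$ of dimension at least $h$.
   Context: A $d$-subspace is a projective subspace of dimension $d$. Linear complex: with $N=\binom{n+1}{h+1}-1$ and Plücker embedding $\wp_{n,h}$ (sending the span of independent $v_0,\dots,v_h\in F^{n+1}$ to $F(v_0\wedge\cdots\wedge v_h)\in\mathrm{PG}(N,F)$, image the Grassmann variety $\mathcal G_{n,h}$), a linear complex of $h$-subspaces is the set of $h$-subspaces whose Plücker image lies in a fixed hyperplane of $\mathrm{PG}(N,F)$. Grassmannian $\Gamma(n,k,F)$: points are $k$-subspaces, lines are pencils $\{X: U\subset X\subset W,\dim X=k\}$ with $\dim U=k-1,\dim W=k+1$. $\mathrm{PG}(n,F)^*$ is the dual projective space. An $(h-1)$-subspace $U$ is singular for $K$ if every $h$-subspace containing $U$ lies in $K$; for non-singular $U$ there is a unique hyperplane $E$ (the polar hyperplane of $U$) such that an $h$-subspace $X\supseteq U$ belongs to $K$ iff $X\subseteq E$; $E$ is the union of the elements of $K$ containing $U$. The partial map $\uparrow K$ on $(h-1)$-subspaces has exceptional set the singular $(h-1)$-subspaces and sends each non-singular $U$ to its polar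 hyperplane. A partial map $\chi$ (defined on domain $\mathbb D(\chi)$, exceptional set $\mathbb A(\chi)$ = complement, $\phi^\chi=\{X^\chi:X\in\phi\cap\mathbb D(\chi)\}$) between semilinear spaces is a linear mapping if for each line $\ell$ exactly one holds: (i) $\ell^\chi$ is a line and $\chi$ maps $\ell$ bijectively onto it; (ii) $\ell^\chi$ is one point and $|\ell\cap\mathbb A(\chi)|=1$; (iii) $\ell\subseteq\mathbb A(\chi)$. *)

(* Defs.v *)
From HB Require Import structures.
From mathcomp Require Import all_boot all_order all_algebra.
From Stdlib Require Import ClassicalEpsilon.
Set Implicit Arguments. Unset Strict Implicit. Unset Printing Implicit Defensive.
Import GRing.Theory.
Local Open Scope ring_scope.

(* PG(n,F) is modelled on the vector space V = 'rV[F]_(n.+1) = F^(n+1).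
   A projective d-subspace is a vector subspace X : {vspace V} with
   \dim X = d+1. *)

Section Defs.
Variables (F : fieldType) (n h : nat).
Local Notation V := 'rV[F]_(n.+1).

Definition basis_mx (X : {vspace V}) : 'M[F]_(h.+1, n.+1) :=
  \matrix_(i < h.+1, j < n.+1) ((vbasis X)`_i) 0 j.

Definition set_enum (S : {set 'I_(n.+1)}) (k : 'I_(h.+1)) : 'I_(n.+1) :=
  nth ord0 (enum S) k.

Definition plucker_coord (X : {vspace V}) (S : {set 'I_(n.+1)}) : F :=
  \det (colsub (set_enum S) (basis_mx X)).

(* Value at the Plücker image of X of the linear form with coefficients c,
   i.e. of the hyperplane  sum_S c_S p_S = 0  of PG(N,F). *)
Definition plucker_form (c : {set 'I_(n.+1)} -> F) (X : {vspace V}) : F :=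
  \sum_(S : {set 'I_(n.+1)} | #|S| == h.+1) c S * plucker_coord X S.

Definition linear_complex (K : {vspace V} -> Prop) : Prop :=
  exists c : {set 'I_(n.+1)} -> F,
    (exists S : {set 'I_(n.+1)}, #|S| = h.+1 /\ c S != 0) /\
    forall X, K X <-> (\dim X = h.+1 /\ plucker_form c X = 0).

Definition singular (K : {vspace V} -> Prop) (U : {vspace V}) : Prop :=
  forall X : {vspace V}, \dim X = h.+1 -> (U <= X)%VS -> K X.

Definition is_polar (K : {vspace V} -> Prop) (U E : {vspace V}) : Prop :=
  \dim E = n /\
  forall X : {vspace V}, \dim X = h.+1 -> (U <= X)%VS -> (K X <-> (X <= E)%VS).

(* The partial map  up K : Gamma(n,h-1,F) -> PG(n,F)^*  (None = undefined).
   It is defined exactly on the non-singular (h-1)-subspaces, where it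
   returns the (paper: unique) polar hyperplane. *)
Definition upK (K : {vspace V} -> Prop) (U : {vspace V}) : option {vspace V} :=
  if excluded_middle_informative (\dim U = h /\ ~ singular K U)
  then Some (epsilon (inhabits 0%VS) (is_polar K U))
  else None.

(* Lines of the Grassmannian Gamma(n,h-1,F): pencils
   { X : U0 <= X <= W, dim X = h-1 (proj.) }, dim U0 = h-2, dim W = h (proj.). *)
Definition grass_line (l : {vspace V} -> Prop) : Prop :=
  exists U0 W : {vspace V}, \dim U0 = h.-1 /\ \dim W = h.+1 /\
    forall X, l X <-> (\dim X = h /\ (U0 <= X)%VS /\ (X <= W)%VS).

(* Lines of the dual space PG(n,F)^*: pencils of hyperplanes through
   an (n-2)-subspace Z. *)
Definition dual_line (l : {vspace V} -> Prop) : Prop :=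
  exists Z : {vspace V}, \dim Z = n.-1 /\
    forall E, l E <-> (\dim E = n /\ (Z <= E)%VS).

(* The subspaces of PG(n,F)^* are the stars of hyperplanes through a
   subspace Z; such a star has projective dimension n - \dim Z.
   "The image of chi spans a subspace of PG(n,F)^* of dimension >= d"
   means every subspace of PG(n,F)^* containing the image has dim >= d. *)
Definition dual_span_dim_ge (chi : {vspace V} -> option {vspace V}) (d : nat) : Prop :=
  forall Z : {vspace V},
    (forall U E, chi U = Some E -> (Z <= E)%VS) -> (d + \dim Z <= n)%N.

End Defs.

Definition exactly_one3 (P Q R : Prop) : Prop :=
  (P /\ ~ Q /\ ~ R) \/ (~ P /\ Q /\ ~ R) \/ (~ P /\ ~ Q /\ R).

Definition linear_mapping (T1 T2 : Type) (L1 : (T1 -> Prop) -> Prop)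
  (L2 : (T2 -> Prop) -> Prop) (chi : T1 -> option T2) : Prop :=
  forall l : T1 -> Prop, L1 l ->
    let img := fun y => exists x, l x /\ chi x = Some y in
    exactly_one3
      ((forall x, l x -> chi x <> None) /\
       (forall x1 x2, l x1 -> l x2 -> chi x1 = chi x2 -> x1 = x2) /\
       L2 img)
      ((exists y, forall y', img y' <-> y' = y) /\
       (exists x, (l x /\ chi x = None) /\
          forall x', l x' /\ chi x' = None -> x' = x))
      (forall x, l x -> chi x = None).

(* Main.v *)
Require Import Defs.
From HB Require Import structures.
From mathcomp Require Import all_boot all_order all_algebra.
From mathcomp Require Import zify ring.
From mathcomp Require Import fingroup perm.
From Stdlib Require Import ClassicalEpsilon Classical.
Set Implicit Arguments. Unset Strict Implicit. Unset Printing Implicit Defensive.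
Import GRing.Theory.
Local Open Scope ring_scope.

Section Work.
Variables (F : fieldType) (n h : nat).
Local Notation V := 'rV[F]_(n.+1).
Variable c : {set 'I_(n.+1)} -> F.

Definition Om (M : 'M[F]_(h.+1, n.+1)) : F :=
  \sum_(S : {set 'I_(n.+1)} | #|S| == h.+1) c S * \det (colsub (@Defs.set_enum n h S) M).

Lemma plucker_Om X : plucker_form h c X = Om (basis_mx h X).
Proof. by []. Qed.

Lemma colsub_mulmx m m' q (f : 'I_q -> 'I_(n.+1)) (A : 'M[F]_(m,m')) (B : 'M_(m', n.+1)) :
  colsub f (A *m B) = A *m colsub f B.
Proof. by apply/matrixP => i j; rewrite !mxE; apply: eq_bigr => k _; rewrite !mxE. Qed.

Lemma Om_mul A M : Om (A *m M) = \det A * Om M.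
Proof.
rewrite /Om mulr_sumr; apply: eq_bigr => S _.
by rewrite colsub_mulmx det_mulmx mulrCA.
Qed.

Definition indep m (M : 'M[F]_(m, n.+1)) := forall u : 'rV_m, u *m M = 0 -> u = 0.

Lemma Om_dep M : ~ indep M -> Om M = 0.
Proof.
move=> nd.
have [u]: exists u : 'rV_(h.+1), ~ (u *m M = 0 -> u = 0).
  by apply: not_all_ex_not.
move=> H; have [uM nu] := imply_to_and _ _ H; have u0 : u != 0 by apply/eqP.
rewrite /Om big1 // => S _; apply/eqP; rewrite mulf_eq0; apply/orP; right.
apply/det0P; exists u => //.
by rewrite -colsub_mulmx uM; apply/matrixP => i j; rewrite !mxE.
Qed.

Definition rows_in m (X : {vspace V}) (M : 'M[F]_(m, n.+1)) := forall i, row i M \in X.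

Definition bmx m (U : {vspace V}) : 'M[F]_(m, n.+1) :=
  \matrix_(i < m, j < n.+1) ((vbasis U)`_i) 0 j.

Lemma basis_bmx X : basis_mx h X = bmx h.+1 X.
Proof. by []. Qed.

Lemma row_bmx m U i : row i (bmx m U) = (vbasis U)`_i.
Proof. by apply/rowP => j; rewrite !mxE. Qed.

Lemma bmx_rows m U : rows_in U (bmx m U).
Proof.
move=> i; rewrite row_bmx.
case: (ltnP i (size (vbasis U))) => hi.
  by apply: vbasis_mem; apply: mem_nth.
by rewrite nth_default // mem0v.
Qed.

Lemma bmx_indep m U : m = \dim U -> indep (bmx m U).
Proof.
move=> e u; subst m; rewrite mulmx_sum_row => H.
have /freeP H2 := basis_free (vbasisP U).
have {}H2 := H2 (fun i => u 0 i); apply/rowP => i; rewrite mxE; apply: H2.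
rewrite -[RHS]H; apply: eq_bigr => j _; by rewrite row_bmx.
Qed.

Lemma row_in_mul k X (v : V) : \dim X = k -> v \in X -> exists a : 'rV_k, v = a *m bmx k X.
Proof.
move=> e vX; subst k; exists (\row_i coord (vbasis X) i v).
rewrite mulmx_sum_row; rewrite {1}(coord_vbasis vX).
by apply: eq_bigr => i _; rewrite row_bmx mxE.
Qed.

Lemma rows_in_mul m k X (M : 'M_(m, n.+1)) : \dim X = k -> rows_in X M ->
  exists A : 'M_(m, k), M = A *m bmx k X.
Proof.
move=> e hM.
have /fin_all_exists [f hf]: forall i, exists a : 'rV_k, row i M = a *m bmx k X.
  by move=> i; apply: row_in_mul.
exists (\matrix_i f i); apply/row_matrixP => i.
by rewrite row_mul rowK hf.
Qed.

Lemma KL X M : \dim X = h.+1 -> rows_in X M -> indep M ->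
  (Om M = 0 <-> Om (basis_mx h X) = 0).
Proof.
move=> dX rM iM; have [A eA] := rows_in_mul dX rM.
have dA : \det A != 0.
  apply/negP => /det0P [u u0 uA]; move/eqP: u0; apply.
  by apply: iM; rewrite eA mulmxA uA mul0mx.
rewrite eA Om_mul basis_bmx; split; first by move/eqP; rewrite mulf_eq0 (negbTE dA) => /eqP.
by move=> ->; rewrite mulr0.
Qed.


Lemma col_mx_0 p (v : 'rV[F]_p) (N : 'M_(h, p)) j : (col_mx v N : 'M_(h.+1, p)) 0 j = v 0 j.
Proof.
rewrite mxE; case: splitP => k /= hk.
  by rewrite (ord1 k).
by move: hk; rewrite /= add1n.
Qed.

Lemma col_mxlift p (v : 'rV[F]_p) (N : 'M_(h, p)) i j :
  (col_mx v N : 'M_(h.+1, p)) (lift 0 i) j = N i j.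
Proof.
rewrite mxE; case: splitP => k /= hk.
  by move: hk; rewrite (ord1 k) /bump /=.
congr (N _ j); apply: val_inj => /=; move: hk; rewrite /bump /= add1n.
by case.
Qed.



Definition wN (N : 'M[F]_(h, n.+1)) : 'cV[F]_(n.+1) :=
  \col_k \sum_(S : {set 'I_(n.+1)} | #|S| == h.+1) c S *
     \sum_(j < h.+1) ((@Defs.set_enum n h S j == k)%:R *
        cofactor (colsub (@Defs.set_enum n h S) (col_mx (0 : 'rV[F]_(n.+1)) N : 'M_(h.+1, n.+1))) 0 j).

Lemma cof_indep (f : 'I_h.+1 -> 'I_(n.+1)) (v v' : V) (N : 'M_(h, n.+1)) j :
  cofactor (colsub f (col_mx v N : 'M_(h.+1, n.+1))) 0 j =
  cofactor (colsub f (col_mx v' N : 'M_(h.+1, n.+1))) 0 j.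
Proof.
rewrite /cofactor; congr (_ * \det _); apply/matrixP => i k.
rewrite !mxE; have := col_mxlift v N i (f (lift j k)); have := col_mxlift v' N i (f (lift j k)).
by rewrite !mxE => -> ->.
Qed.

Lemma OmE (v : V) N : Om (col_mx v N) = (v *m wN N) 0 0.
Proof.
rewrite mxE /Om.
under [RHS]eq_bigr do rewrite mxE mulr_sumr.
rewrite exchange_big /=; apply: eq_bigr => S _.
rewrite (expand_det_row _ 0) mulr_sumr.
rewrite -mulr_sumr.
under [RHS]eq_bigr do rewrite mulrCA.
rewrite -mulr_sumr; congr (_ * _).
under [RHS]eq_bigr do rewrite mulr_sumr.
rewrite exchange_big /=; apply: eq_bigr => j _.
rewrite (bigD1 (@Defs.set_enum n h S j)) //= eqxx mul1r big1 ?addr0.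
  by rewrite mxE col_mx_0 (cof_indep _ v 0).
by move=> i /negbTE; rewrite eq_sym => ->; rewrite mul0r mulr0.
Qed.

Definition phi (N : 'M[F]_(h, n.+1)) (v : V) : F := (v *m wN N) 0 0.

Lemma phiE (N : 'M_(h, n.+1)) (v : V) : Om (col_mx v N) = phi N v.
Proof. exact: OmE. Qed.

Lemma phi_lin N a v w : phi N (a *: v + w) = a * phi N v + phi N w.
Proof. by rewrite /phi mulmxDl -scalemxAl !mxE. Qed.

Definition mw (w : 'cV[F]_(n.+1)) : 'Hom(V, 'rV[F]_1) := linfun (mulmxr w : V -> 'rV[F]_1).
Definition kerw (w : 'cV[F]_(n.+1)) : {vspace V} := lker (mw w).

Lemma memv_kerw w v : (v \in kerw w) = ((v *m w) 0 0 == 0).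
Proof.
rewrite memv_ker /mw lfunE /=.
apply/eqP/eqP => [-> | H]; first by rewrite mxE.
by apply/matrixP => i j; rewrite !ord1 H mxE.
Qed.

Lemma delta_w (w : 'cV[F]_(n.+1)) (k : 'I_(n.+1)) : (delta_mx (0 : 'I_1) k *m w) 0 0 = w k 0.
Proof. by rewrite -rowE mxE. Qed.

Lemma dim_kerw w : w != 0 -> \dim (kerw w) = n.
Proof.
move=> /matrix0Pn [k [z wk]]; rewrite (ord1 z) in wk.
have := limg_ker_dim (mw w) fullv.
rewrite capfv dimvf dim_matrix.
have -> : \dim (mw w @: fullv) = 1%N.
  apply/eqP; rewrite eqn_leq; apply/andP; split.
    by have := dimvS (subvf (mw w @: fullv)); rewrite dimvf dim_matrix.
  rewrite lt0n dimv_eq0; apply/negP => /eqP H0.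
  have := memv_img (mw w) (memvf (delta_mx 0 k)).
  rewrite H0 memv0 /mw lfunE /= => /eqP/matrixP/(_ 0 0).
  by rewrite delta_w mxE; apply/eqP.
by rewrite /kerw mul1r addn1 => -[].
Qed.


Lemma dim_addline (U : {vspace V}) v : v \notin U -> \dim (U + <[v]>) = (\dim U).+1.
Proof.
move=> vU.
have v0 : v != 0 by apply: contraNneq vU => ->; rewrite mem0v.
have := dimv_sum_cap U <[v]>; rewrite dim_vline v0.
have -> : \dim (U :&: <[v]>) = 0%N.
  apply/eqP; rewrite dimv_eq0 -subv0; apply/subvP => y /memv_capP [yU /vlineP [k ek]].
  rewrite memv0; apply/eqP; subst y; case: (eqVneq k 0) => [-> | k0]; first by rewrite scale0r.
  have : k^-1 *: (k *: v) \in U by rewrite memvZ.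
  by rewrite scalerA mulVf // scale1r (negbTE vU).
by rewrite addn0 addn1.
Qed.

Lemma exists_notin (U X : {vspace V}) : (\dim U < \dim X)%N -> exists v, v \in X /\ v \notin U.
Proof.
move=> hd; have : ~~ (X <= U)%VS.
  by apply/negP => /dimvS; rewrite leqNgt hd.
by move=> /subvPn [v vX vU]; exists v.
Qed.

Lemma eq_of_dim (U X : {vspace V}) : (U <= X)%VS -> (\dim X <= \dim U)%N -> U = X.
Proof. by move=> s d; apply/eqP; rewrite eqEdim s d. Qed.

Lemma mul_rows_in m (U : {vspace V}) (N : 'M_(m, n.+1)) r : rows_in U N -> r *m N \in U.
Proof.
move=> hN; rewrite mulmx_sum_row; apply: memv_suml => i _; apply: memvZ; exact: hN.
Qed.

Lemma indep_col m (U : {vspace V}) (N : 'M_(m, n.+1)) x :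
  indep N -> rows_in U N -> x \notin U -> indep (col_mx x N : 'M_(1 + m, n.+1)).
Proof.
move=> iN rN xU u; rewrite -[u]hsubmxK mul_row_col.
rewrite [lsubmx u]mx11_scalar mul_scalar_mx.
set a := lsubmx u 0 0; move=> H.
case: (eqVneq a 0) => [a0 | a0].
  move: H; rewrite a0 scale0r add0r => /iN ->.
  by rewrite raddf0 row_mx0.
exfalso; move/negP: xU; apply.
have -> : x = - a^-1 *: (rsubmx u *m N).
  apply: (scalerI a0); rewrite scaleNr scalerN scalerA mulfV // scale1r.
  by apply/eqP; rewrite -addr_eq0 H.
by rewrite memvZ // mul_rows_in.
Qed.

Lemma row_col0 p (v : 'rV[F]_p) (N : 'M_(h, p)) : row 0 (col_mx v N : 'M_(h.+1, p)) = v.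
Proof. by apply/rowP => j; rewrite mxE col_mx_0. Qed.

Lemma row_collift p (v : 'rV[F]_p) (N : 'M_(h, p)) i :
  row (lift 0 i) (col_mx v N : 'M_(h.+1, p)) = row i N.
Proof. by apply/rowP => j; rewrite [LHS]mxE col_mxlift mxE. Qed.

Lemma rows_in_col (X : {vspace V}) v (N : 'M_(h, n.+1)) :
  v \in X -> rows_in X N -> rows_in X (col_mx v N : 'M_(h.+1, n.+1)).
Proof.
move=> vX rN i; case: (unliftP 0 i) => [j -> | ->].
  by rewrite row_collift.
by rewrite row_col0.
Qed.

Lemma dep_rect m (U : {vspace V}) (M : 'M_(m, n.+1)) :
  (\dim U < m)%N -> rows_in U M -> ~ indep M.
Proof.
move=> hd rM iM.
have [A eA] := rows_in_mul (erefl (\dim U)) rM.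
have : kermx A != 0.
  rewrite -mxrank_eq0 mxrank_ker subn_eq0 -ltnNge.
  by apply: leq_ltn_trans (rank_leq_col A) hd.
move=> /matrix0Pn [i [j kij]].
have : row i (kermx A) = 0.
  apply: iM; rewrite eA mulmxA -row_mul mulmx_ker row0 mul0mx //.
move=> /rowP /(_ j); rewrite [RHS]mxE [LHS]mxE => kij0; by rewrite kij0 eqxx in kij.
Qed.

Lemma phiD N u v : phi N (u + v) = phi N u + phi N v.
Proof. by rewrite -[u]scale1r phi_lin mul1r scale1r. Qed.

Lemma phiZ N a v : phi N (a *: v) = a * phi N v.
Proof. by rewrite /phi -scalemxAl mxE. Qed.

Lemma OmML (M B C : 'M[F]_(h.+1, n.+1)) i b d :
  row i M = b *: row i B + d *: row i C -> row' i B = row' i M -> row' i C = row' i M ->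
  Om M = b * Om B + d * Om C.
Proof.
move=> eM eB eC; rewrite /Om !mulr_sumr -big_split; apply: eq_bigr => S _.
set f := @Defs.set_enum n h S.
have H1 : row i (colsub f M) = b *: row i (colsub f B) + d *: row i (colsub f C).
  apply/rowP => j; have := congr1 (fun r : 'rV_(n.+1) => r 0 (f j)) eM.
  by rewrite !mxE.
have H2 : row' i (colsub f B) = row' i (colsub f M).
  apply/matrixP => a j; have := congr1 (fun r : 'M_(h, n.+1) => r a (f j)) eB.
  by rewrite !mxE.
have H3 : row' i (colsub f C) = row' i (colsub f M).
  apply/matrixP => a j; have := congr1 (fun r : 'M_(h, n.+1) => r a (f j)) eC.
  by rewrite !mxE.
rewrite (determinant_multilinear H1 H2 H3).
by rewrite mulrDr; congr (_ + _); exact: mulrCA.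
Qed.

End Work.

Section Polar.
Variables (F : fieldType) (n h : nat) (c : {set 'I_(n.+1)} -> F).
Local Notation V := 'rV[F]_(n.+1).
Variable K : {vspace V} -> Prop.
Hypothesis hK : forall X, K X <-> \dim X = h.+1 /\ plucker_form h c X = 0.
Hypothesis hn : (h < n)%N.
Variables (U : {vspace V}) (N : 'M[F]_(h, n.+1)).
Hypotheses (dU : \dim U = h) (rN : rows_in U N) (iN : indep N).
Local Notation ph := (phi c N).
Local Notation w := (wN c N).

Lemma P1 v : v \in U -> ph v = 0.
Proof.
move=> vU; rewrite -phiE; apply: Om_dep; apply: (dep_rect (U:=U)).
  by rewrite dU.
exact: rows_in_col.
Qed.

Lemma P2 X : \dim X = h.+1 -> (U <= X)%VS -> (K X <-> forall y, y \in X -> ph y = 0).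
Proof.
move=> dX sUX.
have [v [vX vU]] : exists v, v \in X /\ v \notin U by apply: exists_notin; rewrite dU dX.
have eX : (U + <[v]>)%VS = X.
  apply: eq_of_dim; first by rewrite subv_add sUX -memvE.
  by rewrite dim_addline // dU dX.
have KX : K X <-> ph v = 0.
  rewrite hK plucker_Om -(KL c dX (rows_in_col vX (fun i => subvP sUX _ (rN i)))
     (indep_col iN rN vU)) phiE.
  by split => [[] | ].
split.
  move=> /KX pv y; rewrite -eX => /memv_addP [u uU [z /vlineP [k ->] ->]].
  by rewrite phiD phiZ pv P1 // mulr0 addr0.
by move=> H; apply/KX; exact: H v vX.
Qed.

Lemma P3 : singular h K U <-> w = 0.
Proof.
split.
  move=> sU; apply/eqP; apply: contraTT isT => /matrix0Pn [k [z wk]]; rewrite (ord1 z) in wk; apply/negP => _.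
  set v : V := delta_mx 0 k.
  have pv : ph v != 0 by rewrite /phi delta_w.
  have vU : v \notin U by apply: contra pv => /P1 ->.
  have dX : \dim (U + <[v]>) = h.+1 by rewrite dim_addline // dU.
  have := sU _ dX (addvSl _ _); rewrite (P2 dX (addvSl _ _)) => /(_ v).
  have vX : v \in (U + <[v]>)%VS by apply: (subvP (addvSr U <[v]>)); exact: memv_line.
  by move=> /(_ vX) e; move: pv; rewrite e eqxx.
move=> w0 X dX sUX; apply/(P2 dX sUX) => y _.
by rewrite /phi w0 mulmx0 mxE.
Qed.

Lemma P4 : w != 0 -> is_polar h K U (kerw w).
Proof.
move=> w0; split; first exact: dim_kerw.
move=> X dX sUX; rewrite (P2 dX sUX); split => [H | H].
  apply/subvP => y yX; rewrite memv_kerw; apply/eqP; exact: H.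
by move=> y yX; have := subvP H y yX; rewrite memv_kerw => /eqP.
Qed.

Lemma P5 E : w != 0 -> is_polar h K U E -> E = kerw w.
Proof.
move=> w0 [dE pE].
have sUk : (U <= kerw w)%VS.
  by apply/subvP => u uU; rewrite memv_kerw; apply/eqP; exact: P1.
have [w1 [w1k w1U]] : exists w1, w1 \in kerw w /\ w1 \notin U.
  by apply: exists_notin; rewrite dU dim_kerw.
have dX1 : \dim (U + <[w1]>) = h.+1 by rewrite dim_addline // dU.
have KX1 : K (U + <[w1]>).
  by apply/(proj2 (P4 w0) _ dX1 (addvSl _ _)); rewrite subv_add sUk -memvE.
have sUE : (U <= E)%VS.
  apply: subv_trans (addvSl U <[w1]>) _; exact/(pE _ dX1 (addvSl _ _)).
symmetry; apply: eq_of_dim; last by rewrite dE dim_kerw.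
apply/subvP => y yk; case: (boolP (y \in U)) => yU; first exact: subvP sUE y yU.
have dXy : \dim (U + <[y]>) = h.+1 by rewrite dim_addline // dU.
have : (U + <[y]> <= E)%VS.
  apply/(pE _ dXy (addvSl _ _)); apply/(proj2 (P4 w0) _ dXy (addvSl _ _)).
  by rewrite subv_add sUk -memvE.
by rewrite subv_add => /andP [_]; rewrite -memvE.
Qed.

Lemma upK_some : w != 0 -> upK h K U = Some (kerw w).
Proof.
move=> w0; rewrite /upK; destruct (excluded_middle_informative _) as [H' | H]; last first.
  exfalso; apply: H; split => //; move=> sg; have e := proj1 P3 sg; by rewrite e eqxx in w0.
congr Some; apply: P5 => //; apply: epsilon_spec; exists (kerw w); exact: P4.
Qed.

Lemma upK_none : w = 0 -> upK h K U = None.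
Proof.
move=> w0; rewrite /upK; destruct (excluded_middle_informative _) as [[H1 H]|] => //.
by exfalso; apply: H; apply/P3.
Qed.

End Polar.

Section Helpers.
Variables (F : fieldType) (n : nat).
Local Notation V := 'rV[F]_(n.+1).

Lemma mw_lin (w : 'cV[F]_(n.+1)) (x y : V) s :
  ((x - s *: y) *m w) 0 0 = (x *m w) 0 0 - s * (y *m w) 0 0.
Proof. by rewrite mulmxBl -scalemxAl !mxE. Qed.

Lemma kerwZ (w : 'cV[F]_(n.+1)) t : t != 0 -> kerw (t *: w) = kerw w.
Proof.
move=> t0; apply/vspaceP => v; rewrite !memv_kerw -scalemxAr mxE mulf_eq0.
by rewrite (negbTE t0).
Qed.

Lemma kerw_prop (w1 w2 : 'cV[F]_(n.+1)) : w1 != 0 -> (kerw w1 <= kerw w2)%VS ->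
  exists t, w2 = t *: w1.
Proof.
move=> /matrix0Pn [k [z wk]] sk; rewrite (ord1 z) in wk.
set e : V := delta_mx 0 k.
have ep : (e *m w1) 0 0 != 0 by rewrite delta_w.
exists ((e *m w2) 0 0 / (e *m w1) 0 0).
apply/matrixP => j z'; rewrite (ord1 z') mxE.
pose v : V := delta_mx (0 : 'I_1) j - ((delta_mx (0 : 'I_1) j *m w1) 0 0 / (e *m w1) 0 0) *: e.
have : v \in kerw w1.
  rewrite memv_kerw mw_lin mulrAC -mulrA mulfV // mulr1 subrr //.
move=> /(subvP sk); rewrite memv_kerw mw_lin !delta_w subr_eq0 => /eqP ->.
by ring.
Qed.

Lemma prop2 (al be l m l0 m0 : F) : (al != 0) || (be != 0) ->
  (l != 0) || (m != 0) -> (l0 != 0) || (m0 != 0) ->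
  l * al + m * be = 0 -> l0 * al + m0 * be = 0 ->
  exists2 t, t != 0 & l = t * l0 /\ m = t * m0.
Proof.
move=> hab hlm hlm0 e1 e0.
case: (eqVneq al 0) => [a0 | a0].
  move: hab; rewrite a0 eqxx /= => b0.
  move: e1 e0; rewrite a0 !mulr0 !add0r => /eqP; rewrite mulf_eq0 (negbTE b0) orbF => /eqP m00.
  move=> /eqP; rewrite mulf_eq0 (negbTE b0) orbF => /eqP m00'.
  move: hlm hlm0; rewrite m00 m00' eqxx !orbF => l0' l00.
  exists (l / l0); first by rewrite mulf_neq0 // invr_eq0.
  by split; [rewrite mulfVK | rewrite mulr0].
have el : l = - (m * be) / al.
  by apply: (mulIf a0); rewrite mulfVK //; apply/eqP; rewrite -addr_eq0 e1.
have el0 : l0 = - (m0 * be) / al.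
  by apply: (mulIf a0); rewrite mulfVK //; apply/eqP; rewrite -addr_eq0 e0.
have m0n : m0 != 0.
  by apply: contraTneq hlm0 => m00; rewrite el0 m00 mul0r oppr0 mul0r eqxx.
have mn : m != 0.
  by apply: contraTneq hlm => m00; rewrite el m00 mul0r oppr0 mul0r eqxx.
exists (m / m0); first by rewrite mulf_neq0 // invr_eq0.
split; last by rewrite mulfVK.
rewrite el el0; field; by apply/andP.
Qed.

End Helpers.

Section Line.
Variables (F : fieldType) (n h' : nat) (c : {set 'I_(n.+1)} -> F).
Local Notation h := h'.+1.
Local Notation V := 'rV[F]_(n.+1).
Variable K : {vspace V} -> Prop.
Hypothesis hK : forall X, K X <-> \dim X = h.+1 /\ plucker_form h c X = 0.
Hypothesis hn : (h < n)%N.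
Variables (U0 : {vspace V}) (a b : V).
Hypotheses (dU0 : \dim U0 = h') (aU : a \notin U0) (bU : b \notin (U0 + <[a]>)%VS).

Definition N0 := bmx h' U0.
Definition Phi (x : V) : 'cV[F]_(n.+1) := wN c (col_mx x N0 : 'M_(h, n.+1)).

Lemma row'_swap (v x : V) :
  row' (lift 0 0) (col_mx v (col_mx x N0 : 'M_(h, n.+1)) : 'M_(h.+1, n.+1))
  = (col_mx v N0 : 'M_(h, n.+1)).
Proof.
apply/matrixP => i j; rewrite [LHS]mxE.
case: (unliftP 0 i) => [i' -> | ->].
  have -> : lift (lift 0 0) (lift 0 i') = lift 0 (lift 0 i') :> 'I_(h.+1).
    by apply: val_inj; rewrite /= /bump /=; case: (nat_of_ord i') => //.
  by rewrite !col_mxlift.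
have -> : lift (lift 0 0) 0 = 0 :> 'I_(h.+1) by apply: val_inj.
by rewrite !col_mx_0.
Qed.

Lemma Phi_lin l m (x y : V) : Phi (l *: x + m *: y) = l *: Phi x + m *: Phi y.
Proof.
apply/matrixP => k z; rewrite (ord1 z) [RHS]mxE [X in _ = X + _]mxE [X in _ = _ + X]mxE.
rewrite -!(delta_w _ k) /Phi -!/(phi _ _ _) -!phiE.
apply: (@OmML _ _ _ c _ _ _ (lift 0 0)).
- by rewrite !row_collift !row_col0.
- by rewrite !row'_swap.
- by rewrite !row'_swap.
Qed.


Definition pt (x : V) := (U0 + <[x]>)%VS.
Definition W := (U0 + <[a]> + <[b]>)%VS.

Lemma pt_dim x : x \notin U0 -> \dim (pt x) = h.
Proof. by move=> xU; rewrite /pt dim_addline // dU0. Qed.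

Lemma N0_rows : rows_in U0 N0.
Proof. exact: bmx_rows. Qed.

Lemma N0_indep : indep N0.
Proof. by apply: bmx_indep. Qed.

Lemma pt_upK x : x \notin U0 ->
  upK h K (pt x) = if Phi x == 0 then None else Some (kerw (Phi x)).
Proof.
move=> xU.
have rN : rows_in (pt x) (col_mx x N0 : 'M_(h, n.+1)).
  apply: rows_in_col.
    by apply: (subvP (addvSr U0 <[x]>)); exact: memv_line.
  by move=> i; apply: (subvP (addvSl U0 <[x]>)); exact: N0_rows.
have iN : indep (col_mx x N0 : 'M_(h, n.+1)) := indep_col N0_indep N0_rows xU.
case: eqP => e.
  exact: (upK_none hK (pt_dim xU) rN iN).
by apply: (upK_some hK hn (pt_dim xU) rN iN); apply/eqP.
Qed.

Lemma x_notin l m : (l != 0) || (m != 0) -> l *: a + m *: b \notin U0.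
Proof.
move=> hlm; apply/negP => xU.
case: (eqVneq m 0) => [m0 | m0].
  move: hlm xU; rewrite m0 eqxx orbF scale0r addr0 => l0 lU.
  move/negP: aU; apply; have := memvZ (l^-1) lU.
  by rewrite scalerA mulVf // scale1r.
move/negP: bU; apply.
have -> : b = m^-1 *: (l *: a + m *: b) - (m^-1 * l) *: a.
  by rewrite scalerDr !scalerA mulVf // scale1r addrC addKr.
apply: memvB.
  by apply: (subvP (addvSl U0 <[a]>)); apply: memvZ.
by apply: (subvP (addvSr U0 <[a]>)); apply: memvZ; exact: memv_line.
Qed.

Lemma pt_scale x t : x \notin U0 -> t != 0 -> pt (t *: x) = pt x.
Proof.
move=> xU t0.
have txU : t *: x \notin U0.
  apply: contra xU => txU; have := memvZ (t^-1) txU.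
  by rewrite scalerA mulVf // scale1r.
apply: eq_of_dim; last by rewrite !pt_dim.
rewrite /pt subv_add addvSl /= -memvE; apply: (subvP (addvSr U0 <[x]>)).
by apply: memvZ; exact: memv_line.
Qed.

Lemma pt_W x : x \in W -> x \notin U0 -> (pt x <= W)%VS.
Proof.
move=> xW xU; rewrite /pt subv_add -memvE xW andbT /W.
exact: subv_trans (addvSl U0 <[a]>) (addvSl _ _).
Qed.

Lemma lm_W l m : l *: a + m *: b \in W.
Proof.
apply: memvD.
  apply: (subvP (addvSl _ _)); apply: (subvP (addvSr U0 _)); apply: memvZ; exact: memv_line.
apply: (subvP (addvSr _ _)); apply: memvZ; exact: memv_line.
Qed.

Lemma pt_param U : \dim U = h -> (U0 <= U)%VS -> (U <= W)%VS ->
  exists l m, ((l != 0) || (m != 0)) /\ U = pt (l *: a + m *: b).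
Proof.
move=> dU sU0 sW.
have [y [yU yU0]] : exists y, y \in U /\ y \notin U0 by apply: exists_notin; rewrite dU dU0.
have := subvP sW y yU; rewrite /W => /memv_addP [u /memv_addP [u0 u0U [z /vlineP [l ->] ->]]
   [z' /vlineP [m ->] ey]].
have xU : l *: a + m *: b \in U.
  have -> : l *: a + m *: b = y - u0.
  by symmetry; apply/eqP; rewrite subr_eq ey -addrA addrC.
  by apply: memvB => //; exact: (subvP sU0).
have xU0 : l *: a + m *: b \notin U0.
  apply: contra yU0 => H; rewrite ey -addrA; exact: memvD.
exists l, m; split.
  apply: contraNT xU0; rewrite negb_or !negbK => /andP [/eqP -> /eqP ->].
  by rewrite !scale0r addr0 mem0v.
symmetry; apply: eq_of_dim; last by rewrite pt_dim // dU.
by rewrite /pt subv_add sU0 -memvE.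
Qed.


Variable l : {vspace V} -> Prop.
Hypothesis hl : forall X, l X <-> (\dim X = h /\ (U0 <= X)%VS /\ (X <= W)%VS).

Local Notation img := (fun y => exists x, l x /\ upK h K x = Some y).
Local Notation PP := ((forall x, l x -> upK h K x <> None) /\
       (forall x1 x2, l x1 -> l x2 -> upK h K x1 = upK h K x2 -> x1 = x2) /\
       dual_line img).
Local Notation QQ := ((exists y, forall y', img y' <-> y' = y) /\
       (exists x, (l x /\ upK h K x = None) /\
          forall x', l x' /\ upK h K x' = None -> x' = x)).
Local Notation RR := (forall x, l x -> upK h K x = None).
Local Notation A := (Phi a).
Local Notation B := (Phi b).

Lemma l_ptx x : x \in W -> x \notin U0 -> l (pt x).
Proof. by move=> xW xU; apply/hl; split; [exact: pt_dim | split; [exact: addvSl | exact: pt_W]]. Qed.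

Lemma l_pt l1 m1 : (l1 != 0) || (m1 != 0) -> l (pt (l1 *: a + m1 *: b)).
Proof. by move=> nz; apply: l_ptx; [exact: lm_W | exact: x_notin]. Qed.

Lemma l_param U : l U -> exists l1 m1, ((l1 != 0) || (m1 != 0)) /\ U = pt (l1 *: a + m1 *: b).
Proof. by move=> /hl [dU [s1 s2]]; exact: pt_param. Qed.

Lemma chi_lm l1 m1 : (l1 != 0) || (m1 != 0) ->
  upK h K (pt (l1 *: a + m1 *: b)) =
  if l1 *: A + m1 *: B == 0 then None else Some (kerw (l1 *: A + m1 *: B)).
Proof. by move=> nz; rewrite pt_upK //; [rewrite Phi_lin | exact: x_notin]. Qed.

Lemma la : l (pt a).
Proof.
apply: l_ptx => //; apply: (subvP (addvSl _ _)); apply: (subvP (addvSr U0 _)).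
exact: memv_line.
Qed.

Lemma case3 : A = 0 -> B = 0 -> exactly_one3 PP QQ RR.
Proof.
move=> A0 B0.
have R : RR.
  by move=> x /l_param [l1 [m1 [nz ->]]]; rewrite chi_lm // A0 B0 !scaler0 addr0 eqxx.
right; right; split; [|split] => //.
  by move=> [H _]; apply: (H (pt a) la); exact: R la.
move=> [[y Hy] _]; have [x [lx ex]] := proj2 (Hy y) erefl.
by rewrite R in ex.
Qed.


Lemma kerw_cap (A1 B1 : 'cV[F]_(n.+1)) l1 m1 :
  (kerw A1 :&: kerw B1 <= kerw (l1 *: A1 + m1 *: B1))%VS.
Proof.
apply/subvP => z /memv_capP [zA zB]; rewrite memv_kerw in zA; rewrite memv_kerw in zB; rewrite memv_kerw.
by move: zA zB; rewrite mulmxDr -!scalemxAr !mxE => /eqP -> /eqP ->; rewrite !mulr0 addr0.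
Qed.

Lemma case1 : (forall l1 m1, l1 *: A + m1 *: B = 0 -> l1 = 0 /\ m1 = 0) ->
  exactly_one3 PP QQ RR.
Proof.
move=> hI.
have nzC l1 m1 : (l1 != 0) || (m1 != 0) -> l1 *: A + m1 *: B != 0.
  move=> nz; apply/eqP => /hI [l0 m0]; by rewrite l0 m0 eqxx in nz.
have def : forall x, l x -> upK h K x <> None.
  move=> x /l_param [l1 [m1 [nz ->]]]; rewrite chi_lm // (negbTE (nzC _ _ nz)) //.
have A0 : A != 0 by have := nzC 1 0; rewrite oner_neq0 scale1r scale0r addr0; apply.
have B0 : B != 0 by have := nzC 0 1; rewrite oner_neq0 orbT scale1r scale0r add0r; apply.
left; split; last first.
  split; first by move=> [_ [x [[lx ex] _]]]; exact: def lx ex.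
  by move=> H; apply: (def _ la); apply: H; exact: la.
split => //; split.
  move=> x1 x2 /l_param [l1 [m1 [nz1 ->]]] /l_param [l2 [m2 [nz2 ->]]].
  rewrite !chi_lm // (negbTE (nzC _ _ nz1)) (negbTE (nzC _ _ nz2)) => ek'.
  have ek : kerw (l1 *: A + m1 *: B) = kerw (l2 *: A + m2 *: B) := congr1 (odflt 0%VS) ek'.
  have [t et] : exists t, l2 *: A + m2 *: B = t *: (l1 *: A + m1 *: B).
    by apply: (kerw_prop (nzC _ _ nz1)); rewrite ek subvv.
  have t0 : t != 0.
    by apply: contraTneq (nzC _ _ nz2) => t0; rewrite et t0 scale0r eqxx.
  have : (l2 - t * l1) *: A + (m2 - t * m1) *: B = 0.
    rewrite !scalerBl addrACA -opprD et scalerDr !scalerA subrr //.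
  move=> /hI [/eqP e1 /eqP e2]; move: e1 e2; rewrite !subr_eq0 => /eqP -> /eqP ->.
  rewrite -!scalerA -scalerDr pt_scale //; exact: x_notin.
exists (kerw A :&: kerw B)%VS.
have dZ : \dim (kerw A :&: kerw B) = n.-1.
  have := dimv_sum_cap (kerw A) (kerw B); rewrite !dim_kerw //.
  have : \dim (kerw A + kerw B) = n.+1.
    apply/eqP; rewrite eqn_leq; apply/andP; split.
      by have := dimvS (subvf (kerw A + kerw B)); rewrite dimvf dim_matrix mul1r.
    rewrite ltnNge; apply/negP => hle.
    have e : kerw A = (kerw A + kerw B)%VS.
      by apply: eq_of_dim; [exact: addvSl | rewrite dim_kerw].
    have : (kerw B <= kerw A)%VS by rewrite e addvSr.
    move=> /(kerw_prop B0) [t et].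
    have := hI 1 (- t); rewrite scaleNr et scale1r subrr => /(_ erefl) [/eqP].
    by rewrite oner_eq0.
  move=> ->; lia.
split => //.
move=> E; split.
  move=> [x [/l_param [l1 [m1 [nz ->]]]]]; rewrite chi_lm // (negbTE (nzC _ _ nz)).
  move=> ek'; have <- : kerw (l1 *: A + m1 *: B) = E := congr1 (odflt 0%VS) ek'.
  split; [exact: dim_kerw (nzC _ _ nz) | exact: kerw_cap].
move=> [dE sZE].
have [e [eE eZ]] : exists e, e \in E /\ e \notin (kerw A :&: kerw B)%VS.
  by apply: exists_notin; rewrite dZ dE; lia.
pose l1 := (e *m B) 0 0; pose m1 := - (e *m A) 0 0.
have nz : (l1 != 0) || (m1 != 0).
  apply: contraNT eZ; rewrite negb_or !negbK oppr_eq0 => /andP [e1 e2].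
  by rewrite memv_cap !memv_kerw e1 e2.
have eC : e \in kerw (l1 *: A + m1 *: B).
  by rewrite memv_kerw mulmxDr -!scalemxAr mxE [X in X + _]mxE [X in _ + X]mxE /l1 /m1 mulNr mulrC subrr.
have dZe : \dim (kerw A :&: kerw B + <[e]>) = n by rewrite dim_addline // dZ; lia.
have e1 : (kerw A :&: kerw B + <[e]>)%VS = E.
  by apply: eq_of_dim; [rewrite subv_add sZE -memvE | rewrite dZe dE].
have e2 : (kerw A :&: kerw B + <[e]>)%VS = kerw (l1 *: A + m1 *: B).
  apply: eq_of_dim; first by rewrite subv_add (kerw_cap A B l1 m1) -memvE eC.
  by rewrite dZe (dim_kerw (nzC _ _ nz)).
exists (pt (l1 *: a + m1 *: b)); split; first exact: l_pt.
by rewrite chi_lm // (negbTE (nzC _ _ nz)) -e2 e1.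
Qed.


Lemma case2 (D : 'cV[F]_(n.+1)) al be l0 m0 :
  D != 0 -> (al != 0) || (be != 0) -> A = al *: D -> B = be *: D ->
  (l0 != 0) || (m0 != 0) -> l0 *: A + m0 *: B = 0 ->
  exactly_one3 PP QQ RR.
Proof.
move=> D0 nzab eA eB nz0 e0.
have CE l1 m1 : l1 *: A + m1 *: B = (l1 * al + m1 * be) *: D.
  by rewrite eA eB !scalerA scalerDl.
have coef0 l1 m1 : (l1 *: A + m1 *: B == 0) = (l1 * al + m1 * be == 0).
  by rewrite CE scaler_eq0 (negbTE D0) orbF.
have imgD : img (kerw D).
  case: (eqVneq al 0) => [a0 | a0].
    have b0 : be != 0 by move: nzab; rewrite a0 eqxx.
    exists (pt (0 *: a + 1 *: b)); split; first by apply: l_pt; rewrite oner_neq0 orbT.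
    rewrite chi_lm ?oner_neq0 ?orbT // coef0 mul0r add0r mul1r (negbTE b0) CE.
    by rewrite mul0r add0r mul1r kerwZ.
  exists (pt (1 *: a + 0 *: b)); split; first by apply: l_pt; rewrite oner_neq0.
  rewrite chi_lm ?oner_neq0 // coef0 mul0r addr0 mul1r (negbTE a0) CE.
  by rewrite mul0r addr0 mul1r kerwZ.
right; left; split.
  by move=> [H _]; apply: (H _ (l_pt nz0)); rewrite chi_lm // e0 eqxx.
split; last first.
  by move=> H; have [x [lx ex]] := imgD; rewrite H in ex.
split.
  exists (kerw D) => y'; split; last by move=> ->.
  move=> [x [/l_param [l1 [m1 [nz ->]]]]]; rewrite chi_lm // coef0.
  case: eqP => // /eqP cne ek'.
  have <- : kerw ((l1 * al + m1 * be) *: D) = y' by rewrite -CE; exact: (congr1 (odflt 0%VS) ek').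
  by rewrite kerwZ.
exists (pt (l0 *: a + m0 *: b)); split.
  by split; [exact: l_pt | rewrite chi_lm // e0 eqxx].
move=> x' [/l_param [l1 [m1 [nz ->]]]]; rewrite chi_lm // coef0.
case: eqP => // /eqP c1 _.
have c0 : l0 * al + m0 * be == 0 by rewrite -coef0 e0.
have [t t0 [-> ->]] := prop2 nzab nz nz0 (eqP c1) (eqP c0).
by rewrite -!scalerA -scalerDr pt_scale //; exact: x_notin.
Qed.

Lemma line_lm : exactly_one3 PP QQ RR.
Proof.
case: (classic (forall l1 m1, l1 *: A + m1 *: B = 0 -> l1 = 0 /\ m1 = 0)) => [hI | hnI].
  exact: case1.
have [l0 [m0 [e0 nz0]]] : exists l0 m0, l0 *: A + m0 *: B = 0 /\ ((l0 != 0) || (m0 != 0)).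
  apply: NNPP => H; apply: hnI => l1 m1 e1; apply: NNPP => H2; apply: H.
  exists l1, m1; split => //; apply: contraT; rewrite negb_or !negbK => /andP [/eqP p /eqP q].
  by exfalso; apply: H2.
case: (eqVneq A 0) => [A0 | A0]; case: (eqVneq B 0) => [B0 | B0].
- exact: case3.
- apply: (@case2 B 0 1 l0 m0) => //; [by rewrite oner_neq0 orbT | by rewrite scale0r | by rewrite scale1r].
- apply: (@case2 A 1 0 l0 m0) => //; [by rewrite oner_neq0 | by rewrite scale1r | by rewrite scale0r].
- have m0n : m0 != 0.
    apply: contraTneq A0 => m00; rewrite negbK; move: e0 nz0; rewrite m00 scale0r addr0 eqxx orbF => /eqP.
    by rewrite scaler_eq0 => /orP [/eqP -> | /eqP ->]; rewrite ?eqxx.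
  apply: (@case2 A 1 (- (l0 / m0)) l0 m0) => //; first by rewrite oner_neq0.
    by rewrite scale1r.
  apply: (scalerI m0n); rewrite scalerA mulrN mulrCA mulfV // mulr1 scaleNr.
  by apply/eqP; rewrite -addr_eq0 addrC e0.
Qed.

End Line.

Section Final.
Variables (F : fieldType) (n h : nat) (c : {set 'I_(n.+1)} -> F).
Local Notation V := 'rV[F]_(n.+1).
Variable K : {vspace V} -> Prop.
Hypothesis hK : forall X, K X <-> \dim X = h.+1 /\ plucker_form h c X = 0.
Hypothesis hn : (h < n)%N.

Lemma upK_dim U E : upK h K U = Some E -> \dim U = h.
Proof.
by rewrite /upK; destruct (excluded_middle_informative _) as [[d d2]|].
Qed.

Lemma upK_inv U E : upK h K U = Some E ->
  \dim U = h /\ wN c (bmx h U) != 0 /\ E = kerw (wN c (bmx h U)).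
Proof.
move=> H; have dU := upK_dim H.
have rN := @bmx_rows _ _ h U; have iN := bmx_indep (esym dU).
case: (eqVneq (wN c (bmx h U)) 0) => w0.
  by rewrite (upK_none hK dU rN iN w0) in H.
rewrite (upK_some hK hn dU rN iN w0) in H.
split => //; split => //; symmetry; exact: (congr1 (odflt 0%VS) H).
Qed.

Lemma null_prop U E : upK h K U = Some E -> (U <= E)%VS.
Proof.
move=> /upK_inv [dU [w0 ->]]; apply/subvP => u uU; rewrite memv_kerw; apply/eqP.
exact: (P1 c dU (@bmx_rows _ _ h U) uU).
Qed.

Definition spanN m (N : 'M[F]_(m, n.+1)) : {vspace V} := <<[tuple row i N | i < m]>>%VS.

Lemma spanN_rows m (N : 'M[F]_(m, n.+1)) : rows_in (spanN N) N.
Proof.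
move=> i; apply: memv_span; have := mem_tnth i [tuple row i N | i < m].
by rewrite tnth_mktuple.
Qed.

Lemma spanN_dim m (N : 'M[F]_(m, n.+1)) : indep N -> \dim (spanN N) = m.
Proof.
move=> iN.
have fr : free [tuple row i N | i < m].
  apply/freeP => k Hk i.
  have : (\row_i k i) *m N = 0.
    rewrite mulmx_sum_row -[RHS]Hk; apply: eq_bigr => j _.
    by rewrite mxE -tnth_nth tnth_mktuple.
  by move=> /iN /rowP /(_ i); rewrite !mxE.
by move: fr; rewrite /free size_tuple => /eqP.
Qed.

Lemma indep_dsub m (v : V) (N : 'M[F]_(m, n.+1)) :
  indep (col_mx v N : 'M_(1 + m, n.+1)) -> indep N.
Proof.
move=> iM u uN.
have : row_mx (0 : 'M_(1, 1)) u *m (col_mx v N : 'M_(1 + m, n.+1)) = 0.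
  by rewrite mul_row_col mul0mx uN addr0.
move=> /iM e; have := congr1 rsubmx e; rewrite row_mxKr => ->.
by apply/matrixP => i j; rewrite !mxE.
Qed.

Lemma Om_split (M : 'M[F]_(h.+1, n.+1)) :
  Om c M = phi c (dsubmx (M : 'M_(1 + h, n.+1))) (usubmx (M : 'M_(1 + h, n.+1))).
Proof. by rewrite -phiE vsubmxK. Qed.


Definition MS (S : {set 'I_(n.+1)}) : 'M[F]_(h.+1, n.+1) :=
  \matrix_(i, j) (j == @Defs.set_enum n h S i)%:R.

Lemma se_size (T : {set 'I_(n.+1)}) : #|T| = h.+1 -> size (enum T) = h.+1.
Proof. by rewrite -cardE. Qed.

Lemma se_inj (T : {set 'I_(n.+1)}) : #|T| = h.+1 -> injective (@Defs.set_enum n h T).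
Proof.
move=> hT i j; rewrite /Defs.set_enum => e; apply: val_inj; apply/eqP.
rewrite -(nth_uniq ord0 _ _ (enum_uniq (mem T))) ?se_size //; [apply/eqP; exact: e | exact: ltn_ord | exact: ltn_ord].
Qed.

Lemma se_mem (T : {set 'I_(n.+1)}) k : #|T| = h.+1 -> @Defs.set_enum n h T k \in T.
Proof.
move=> hT; rewrite /Defs.set_enum -mem_enum; apply: mem_nth; by rewrite se_size.
Qed.

Lemma det_MS (T S : {set 'I_(n.+1)}) : #|T| = h.+1 -> #|S| = h.+1 ->
  \det (colsub (@Defs.set_enum n h T) (MS S)) = (T == S)%:R.
Proof.
move=> hT hS; case: (eqVneq T S) => [<- | ne].
  have -> : colsub (@Defs.set_enum n h T) (MS T) = 1%:M.
    by apply/matrixP => i k; rewrite !mxE (inj_eq (se_inj hT)) eq_sym.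
  by rewrite det1.
have : ~~ (T \subset S).
  apply: contra ne => sub; rewrite eqEcard sub /= hT hS.
  by [].
move=> /subsetPn [t tT tS].
have ki : (index t (enum T) < h.+1)%N by rewrite -(se_size hT) index_mem mem_enum.
rewrite (expand_det_col _ (Ordinal ki)) big1 // => i _.
rewrite !mxE /Defs.set_enum /= nth_index ?mem_enum //.
have -> : (t == @Defs.set_enum n h S i) = false.
  by apply: contraNF tS => /eqP ->; exact: se_mem.
by rewrite mul0r.
Qed.

Lemma Om_MS (S : {set 'I_(n.+1)}) : #|S| = h.+1 -> Om c (MS S) = c S.
Proof.
move=> hS; rewrite /Om (bigD1 S) ?hS //= det_MS // eqxx mulr1 big1 ?addr0 //.
move=> T /andP [/eqP hT ne]; by rewrite det_MS // (negbTE ne) mulr0.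
Qed.

Lemma Om_zero : (forall (N : 'M[F]_(h, n.+1)) v, phi c N v = 0) -> forall M : 'M[F]_(h.+1, n.+1), Om c M = 0.
Proof. by move=> H M; rewrite Om_split H. Qed.

Lemma exists_def (S : {set 'I_(n.+1)}) : #|S| = h.+1 -> c S != 0 -> exists U, upK h K U <> None.
Proof.
move=> hS cS; apply: NNPP => H.
have none : forall U, upK h K U = None.
  move=> U; case e: (upK h K U) => //; exfalso; apply: H; exists U; by rewrite e.
move/eqP: cS; apply; rewrite -Om_MS //; apply: Om_zero => N v.
case: (classic (indep N)) => iN; last first.
  rewrite -phiE; apply: Om_dep => iM; apply: iN; exact: indep_dsub iM.
have dU := spanN_dim iN; have rN := spanN_rows N.
case: (eqVneq (wN c N) 0) => w0.
  by rewrite /phi w0 mulmx0 mxE.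
by have := upK_some hK hn dU rN iN w0; rewrite none.
Qed.


Definition setrow (M : 'M[F]_(h.+1, n.+1)) i (x : V) : 'M[F]_(h.+1, n.+1) :=
  \matrix_(a, j) if a == i then x 0 j else M a j.

Lemma row_setrow M i x : row i (setrow M i x) = x.
Proof. by apply/rowP => j; rewrite !mxE eqxx. Qed.

Lemma row'_setrow M i x : row' i (setrow M i x) = row' i M.
Proof.
apply/matrixP => a j; rewrite !mxE.
by have -> : (lift i a == i) = false by apply/negbTE; rewrite eq_sym neq_lift.
Qed.

Section ZZ.
Variable Z : {vspace V}.
Hypothesis HZ : forall (N : 'M[F]_(h, n.+1)) z, z \in Z -> phi c N z = 0.

Lemma usub_row0 (M : 'M[F]_(h.+1, n.+1)) : usubmx (M : 'M_(1 + h, n.+1)) = row 0 M.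
Proof.
apply/rowP => j; rewrite !mxE; congr (M _ j); by apply: val_inj.
Qed.

Lemma Om_rowZ (M : 'M[F]_(h.+1, n.+1)) i : row i M \in Z -> Om c M = 0.
Proof.
move=> iZ.
set s : 'S_(h.+1) := tperm 0 i.
have H0 : Om c (perm_mx s *m M) = 0.
  rewrite Om_split HZ // usub_row0 -row_permE.
  have -> : row 0 (row_perm s M) = row i M.
    by apply/rowP => j; rewrite !mxE /s tpermL.
  exact: iZ.
by move: H0; rewrite Om_mul det_perm => /eqP; rewrite mulf_eq0 signr_eq0 /= => /eqP.
Qed.

Lemma Om_setrowZ M i x z : z \in Z -> Om c (setrow M i (x + z)) = Om c (setrow M i x).
Proof.
move=> zZ.
rewrite (@OmML _ _ _ c _ (setrow M i x) (setrow M i z) i 1 1).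
- by rewrite (@Om_rowZ (setrow M i z) i) ?row_setrow // mulr0 addr0 mul1r.
- by rewrite !row_setrow !scale1r.
- by rewrite !row'_setrow.
- by rewrite !row'_setrow.
Qed.

Lemma Om_allZ : (n < h + \dim Z)%N -> forall M : 'M[F]_(h.+1, n.+1), Om c M = 0.
Proof.
move=> hlt M.
have /fin_all_exists [f hf] : forall i : 'I_(h.+1),
    exists zc : V * V, [/\ zc.1 \in Z, zc.2 \in (Z^C)%VS & row i M = zc.1 + zc.2].
  move=> i; have := memvf (row i M); rewrite -(addv_complf Z).
  by move=> /memv_addP [u uZ [v vC e]]; exists (u, v).
pose Mk k : 'M[F]_(h.+1, n.+1) := \matrix_(a, j) if (a < k)%N then (f a).2 0 j else M a j.
have step : forall k, (k <= h.+1)%N -> Om c M = Om c (Mk k).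
  elim => [_ | k IH hk].
    by congr (Om c _); apply/matrixP => a j; rewrite mxE ltn0.
  rewrite IH ?(ltnW hk) //.
  pose i := Ordinal hk.
  have [f1 f2 fe] := hf i.
  have E1 : Mk k = setrow (Mk k.+1) i ((f i).2 + (f i).1).
    apply/matrixP => a j; rewrite !mxE.
    case: (eqVneq a i) => [-> | ne] /=.
      by move/rowP: fe => /(_ j); rewrite ltnn !mxE addrC.
    rewrite ltnS (leq_eqVlt a k).
    have -> : (a == k :> nat) = false by apply/negbTE; apply: contra ne => /eqP e; apply/eqP; apply: val_inj.
    by [].
  have E2 : Mk k.+1 = setrow (Mk k.+1) i (f i).2.
    apply/matrixP => a j; rewrite !mxE.
    case: (eqVneq a i) => [-> | ne] //=.
    by rewrite ltnSn.
  by rewrite E1 Om_setrowZ // -E2.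
rewrite (step h.+1 (leqnn _)); apply: Om_dep.
apply: (@dep_rect _ _ _ (Z^C)%VS).
  rewrite dimv_compl dimvf dim_matrix mul1r; lia.
move=> i; have -> : row i (Mk h.+1) = (f i).2.
  by apply/rowP => j; rewrite !mxE ltn_ord.
by have [] := hf i.
Qed.

End ZZ.

Lemma dual_span (S : {set 'I_(n.+1)}) : #|S| = h.+1 -> c S != 0 -> dual_span_dim_ge (upK h K) h.
Proof.
move=> hS cS Z HZ; rewrite leqNgt; apply/negP => hlt.
have HZ' : forall (N : 'M[F]_(h, n.+1)) z, z \in Z -> phi c N z = 0.
  move=> N z zZ.
  case: (classic (indep N)) => iN; last first.
    rewrite -phiE; apply: Om_dep => iM; apply: iN; exact: indep_dsub iM.
  have dU := spanN_dim iN; have rN := spanN_rows N.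
  case: (eqVneq (wN c N) 0) => w0.
    by rewrite /phi w0 mulmx0 mxE.
  have := HZ _ _ (upK_some hK hn dU rN iN w0) => /subvP /(_ z zZ).
  by rewrite memv_kerw => /eqP.
move/eqP: cS; apply; rewrite -Om_MS //; exact: (Om_allZ HZ' hlt).
Qed.

End Final.

Local Close Scope ring_scope.

Theorem theorem5p3 (F : fieldType) (n h : nat) (K : {vspace 'rV[F]_(n.+1)} -> Prop) :
  (1 <= h)%N -> (h <= n.-1)%N -> linear_complex h K ->
  (* (a) up K is a generalised null polarity *)
  (linear_mapping (grass_line h) (dual_line (n:=n)) (upK h K) /\
   (exists U, upK h K U <> None) /\
   (forall U E, upK h K U = Some E -> (U <= E)%VS)) /\
  (* (b) the image of up K spans a subspace of PG(n,F)^* of dimension >= h *)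
  dual_span_dim_ge (upK h K) h.
Proof.
case: h => [//|h'] _ hn1 [c [[S [hS cS]] hK]].
have hn : (h'.+1 < n)%N by lia.
split; last exact: (dual_span hK hn hS cS).
split; last split.
- move=> l [U0 [W' [dU0 [dW hl]]]] img.
  rewrite /= in dU0.
  case: (boolP (U0 <= W')%VS) => sW; last first.
    have hl0 : forall X, ~ l X.
      move=> X /hl [_ [s1 s2]]; move/negP: sW; apply; exact: subv_trans s1 s2.
    right; right; split; [|split].
    + move=> [_ [_ [Z [dZ HZ]]]].
      have [e [_ eZ]] : exists e, e \in fullv /\ e \notin Z.
        by apply: exists_notin; rewrite dZ dimvf dim_matrix; rewrite GRing.mul1r; lia.
      have dE : \dim (Z + <[e]>) = n by rewrite dim_addline // dZ; lia.
      have [x [lx _]] := proj2 (HZ (Z + <[e]>)%VS) (conj dE (addvSl _ _)).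
      exact: hl0 lx.
    + move=> [[y Hy] _]; have [x [lx _]] := proj2 (Hy y) erefl; exact: hl0 lx.
    + by move=> x lx; case: (hl0 x lx).
  have [a [aW aU]] : exists a, a \in W' /\ a \notin U0.
    by apply: exists_notin; rewrite dU0 dW.
  have dUa : \dim (U0 + <[a]>) = h'.+1 by rewrite dim_addline // dU0.
  have [b [bW bU]] : exists b, b \in W' /\ b \notin (U0 + <[a]>)%VS.
    by apply: exists_notin; rewrite dUa dW.
  have eW : W U0 a b = W'.
    apply: eq_of_dim; first by rewrite /W !subv_add sW -!memvE aW bW.
    by rewrite /W dim_addline // dUa dW.
  have hl' : forall X, l X <-> (\dim X = h'.+1 /\ (U0 <= X)%VS /\ (X <= W U0 a b)%VS).
    by move=> X; rewrite eW; exact: hl X.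
  exact: (line_lm hK hn dU0 aU bU hl').
- exact: (exists_def hK hn hS cS).
- move=> U E; exact: (null_prop hK hn).
Qed.
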